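(* There exist a transient MDP with a sink state and a risk level $\beta>0$ such that $g^\star_\infty(\beta)=-\infty$.
   Context: MDP: states $\bar{\mathcal S}=\{1,\dots,S,S+1\}$, $e:=S+1$ a sink state, $\mathcal S=\{1,\dots,S\}$; finite actions; transitions $p(s,a,s')$, real rewards $r(s,a,s')$; $p(e,a,e)=1$, $r(e,a,e)=0$; initial distribution $\mu$ on $\mathcal S$ with $\mu>0$. Transient: for every stationary deterministic policy $\pi$, $\sum_{t\ge0}\mathbb P^{\pi,s}[\tilde s_t=s']<\infty$ for all $s,s'\in\mathcal S$. $\mathrm{ERM}_\beta[\tilde x]=-\beta^{-1}\log\mathbb E e^{-\beta\tilde x}$. $g_t(\pi,\beta)=\mathrm{ERM}^{\pi,\mu}_\beta[\sum_{k=0}^t r(\tilde s_k,\tilde a_k,\tilde s_{k+1})]$, $g^\star_t(\beta)=\sup_{\pi}g_t(\pi,\beta)$ over history-dependent randomized policies, and $g^\star_\infty(\beta)=\liminf_{t\to\infty}g^\star_t(\beta)$. *)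

(* Defs.v *)
From HB Require Import structures.
From mathcomp Require Import all_boot all_order all_algebra.
From mathcomp Require Import all_classical all_reals.
From mathcomp Require Import ereal topology normedtype sequences exp.
Set Implicit Arguments. Unset Strict Implicit. Unset Printing Implicit Defensive.
Import Order.TTheory GRing.Theory Num.Theory.
Local Open Scope ring_scope.

(* States: 'I_nS.+1 = {0,..,nS}; the last one (ord_max) is the sink e = S+1,
   the others are the states 1..S of the paper.  Actions: 'I_nA.+1 (finite,
   nonempty). *)
Definition state (nS : nat) := 'I_nS.+1.
Definition action (nA : nat) := 'I_nA.+1.
Definition sink (nS : nat) : state nS := ord_max.

Section MDP.
Variables (R : realType) (nS nA : nat).
Local Notation St := (state nS).
Local Notation Ac := (action nA).

Definition is_mdp (p r : St -> Ac -> St -> R) (mu : St -> R) : Prop :=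
  [/\ (forall s a s', 0 <= p s a s'),
      (forall s a, \sum_(s' : St) p s a s' = 1),
      (forall a, p (sink nS) a (sink nS) = 1),
      (forall a, r (sink nS) a (sink nS) = 0) &
      [/\ mu (sink nS) = 0,
          (forall s, s != sink nS -> 0 < mu s) &
          \sum_(s : St) mu s = 1]].

(* History-dependent randomized policies: a distribution over actions for
   every history (s_0,a_0,...,s_{k-1},a_{k-1}) and current state s_k. *)
Definition policy := seq (St * Ac) -> St -> Ac -> R.

Definition is_policy (pi : policy) : Prop :=
  (forall h s a, 0 <= pi h s a) /\ (forall h s, \sum_(a : Ac) pi h s a = 1).

Definition det_policy (d : St -> Ac) : policy :=
  fun _ s a => (a == d s)%:R.

(* A trajectory with n transitions: states s_0..s_n, actions a_0..a_{n-1}. *)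
Definition st_cur n (ss : {ffun 'I_n.+1 -> St}) (k : 'I_n) : St :=
  ss (widen_ord (leqnSn n) k).
Definition st_next n (ss : {ffun 'I_n.+1 -> St}) (k : 'I_n) : St :=
  ss (lift ord0 k).
Definition history n (ss : {ffun 'I_n.+1 -> St}) (aa : {ffun 'I_n -> Ac})
    (k : 'I_n) : seq (St * Ac) :=
  map (fun j : 'I_n => (st_cur ss j, aa j)) (seq.filter (fun j : 'I_n => (j < k)%N) (enum 'I_n)).

Definition path_prob (p : St -> Ac -> St -> R) (nu : St -> R) (pi : policy)
    n (ss : {ffun 'I_n.+1 -> St}) (aa : {ffun 'I_n -> Ac}) : R :=
  nu (ss ord0) *
  \prod_(k < n) (pi (history ss aa k) (st_cur ss k) (aa k) *
                 p (st_cur ss k) (aa k) (st_next ss k)).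

Definition expect (p : St -> Ac -> St -> R) (nu : St -> R) (pi : policy) n
    (X : {ffun 'I_n.+1 -> St} -> {ffun 'I_n -> Ac} -> R) : R :=
  \sum_(ss : {ffun 'I_n.+1 -> St}) \sum_(aa : {ffun 'I_n -> Ac})
     path_prob p nu pi ss aa * X ss aa.

Definition dirac_st (s : St) : St -> R := fun s' => (s' == s)%:R.

Definition occ (p : St -> Ac -> St -> R) (pi : policy) (s s' : St) (t : nat) : R :=
  expect p (dirac_st s) pi (n := t) (fun ss _ => ((ss ord_max : St) == s')%:R).

Definition transient (p : St -> Ac -> St -> R) : Prop :=
  forall (d : St -> Ac) (s s' : St), s != sink nS -> s' != sink nS ->
    (\sum_(0 <= t <oo) (occ p (det_policy d) s s' t)%:E < +oo)%E.

Definition ERM_of (beta Eexp : R) : R := - beta^-1 * ln Eexp.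

Definition total_reward (r : St -> Ac -> St -> R) t
    (ss : {ffun 'I_t.+2 -> St}) (aa : {ffun 'I_t.+1 -> Ac}) : R :=
  \sum_(k < t.+1) r (st_cur ss k) (aa k) (st_next ss k).

Definition g_t (p r : St -> Ac -> St -> R) (mu : St -> R) (t : nat)
    (pi : policy) (beta : R) : R :=
  ERM_of beta (expect p mu pi (n := t.+1) (fun ss aa => expR (- beta * total_reward r ss aa))).

Definition g_star_t (p r : St -> Ac -> St -> R) (mu : St -> R) (beta : R)
    (t : nat) : \bar R :=
  ereal_sup [set (g_t p r mu t pi beta)%:E | pi in [set pi | is_policy pi]].

Definition g_star_infty (p r : St -> Ac -> St -> R) (mu : St -> R) (beta : R)
    : \bar R :=
  limn_einf (g_star_t p r mu beta).

End MDP.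

(* Main.v *)
Require Import Defs.
From HB Require Import structures.
From mathcomp Require Import all_boot all_order all_algebra.
From mathcomp Require Import all_classical all_reals.
From mathcomp Require Import ereal topology normedtype sequences exp.
From mathcomp Require Import lra.
Import Order.TTheory GRing.Theory Num.Theory.
Local Open Scope ring_scope.

Section Ex.
Variable R : realType.
Local Notation St := (state 1).
Local Notation Ac := (action 0).
Definition q : R := expR (-1).
Definition pE (s : St) (a : Ac) (s' : St) : R :=
  if s == sink 1 then (s' == sink 1)%:R else if s' == sink 1 then 1 - q else q.
Definition rE (s : St) (a : Ac) (s' : St) : R := if s == sink 1 then 0 else -2.
Definition muE (s : St) : R := (s != sink 1)%:R.

Lemma q_gt0 : 0 < q. Proof. exact: expR_gt0. Qed.
Lemma q_lt1 : q < 1. Proof. by rewrite /q expR_lt1 ltrN10. Qed.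

Lemma nonsink (s : St) : s != sink 1 -> s = ord0.
Proof. by case: s => [[|[|]]] //= i _; apply: val_inj. Qed.

Lemma sink_or0 (s : St) : s != ord0 -> s = sink 1.
Proof. by case: s => [[|[|]]] //= i _; apply: val_inj. Qed.

Lemma mdpE : is_mdp pE rE muE.
Proof.
split.
- move=> s a s'; rewrite /pE; case: ifP => _; first by [].
  case: ifP => _; last exact: ltW q_gt0.
  by rewrite subr_ge0 ltW // q_lt1.
- move=> s a; rewrite big_ord_recr big_ord1 /pE /=.
  by case: ifP => Hs; rewrite /= ?add0r // addrC subrK.
- by move=> a; rewrite /pE eqxx.
- by move=> a; rewrite /rE eqxx.
split.
- by rewrite /muE eqxx.
- by move=> s hs; rewrite /muE hs ltr01.
- by rewrite big_ord_recr big_ord1 /muE /= addr0.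
Qed.


Lemma pol_one (pi : policy R 1 0) : is_policy pi -> forall h s, pi h s ord0 = 1.
Proof. by move=> [_ H] h s; rewrite -(H h s) big_ord1. Qed.

Lemma path_prob_ge0 (nu : St -> R) (pi : policy R 1 0) n ss aa :
  (forall s, 0 <= nu s) -> is_policy pi -> 0 <= path_prob pE nu pi (n:=n) ss aa.
Proof.
move=> Hnu [Hpi _]; rewrite /path_prob mulr_ge0 // prodr_ge0 // => k _.
by rewrite mulr_ge0 //; case: mdpE => H _ _ _ _; apply: H.
Qed.

Lemma Ebound (pi : policy R 1 0) t : is_policy pi ->
  expR (t.+1%:R) <= expect pE muE pi (n := t.+1)
     (fun ss aa => expR (- 1 * total_reward rE ss aa)).
Proof.
move=> Hpi.
pose c0 : {ffun 'I_t.+2 -> St} := [ffun => ord0].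
pose a0 : {ffun 'I_t.+1 -> Ac} := [ffun => ord0].
have Hterm : forall ss aa, 0 <= path_prob pE muE pi ss aa *
   expR (- 1 * total_reward rE (t:=t) ss aa).
  by move=> ss aa; rewrite mulr_ge0 ?expR_ge0 // path_prob_ge0.
rewrite /expect (bigD1 c0) //= (bigD1 a0) //= -addrA.
apply: le_trans (_ : _ <= path_prob pE muE pi c0 a0 *
   expR (- 1 * total_reward rE c0 a0)) _; last first.
  by rewrite lerDl addr_ge0 // sumr_ge0 // => *; rewrite sumr_ge0.
have Hcur : forall k, st_cur c0 k = ord0 by move=> k; rewrite /st_cur ffunE.
have Hnext : forall k, st_next c0 k = ord0 by move=> k; rewrite /st_next ffunE.
rewrite /path_prob /total_reward.
under eq_bigr do rewrite Hcur Hnext ffunE pol_one // mul1r.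
under [X in expR (_ * X)]eq_bigr do rewrite Hcur Hnext.
rewrite ffunE /muE /= mul1r prodr_const sumr_const card_ord /pE /rE /=.
rewrite /q -expRM_natl -expRD.
have -> : t.+1%:R * -1 + -1 * (-2 *+ t.+1) = t.+1%:R :> R.
  by rewrite -mulr_natr; lra.
by [].
Qed.

Lemma gt_bound (pi : policy R 1 0) t : is_policy pi ->
  g_t pE rE muE t pi 1 <= - t.+1%:R.
Proof.
move=> Hpi; rewrite /g_t /ERM_of invr1 mulN1r lerN2.
have H := @Ebound pi t Hpi.
rewrite -[X in X <= _](expRK (t.+1%:R)) ler_ln ?posrE ?expR_gt0 //.
exact: lt_le_trans (expR_gt0 _) H.
Qed.

Lemma gstar_bound t : (g_star_t pE rE muE 1 t <= (- t.+1%:R)%:E)%E.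
Proof.
apply: ge_ereal_sup => _ [pi Hpi <-].
by rewrite lee_fin gt_bound.
Qed.

Lemma ginf : g_star_infty pE rE muE 1 = -oo%E.
Proof.
apply: (cvgNy_limn_einf_sup _).1.
apply/cvgeNyPle => A.
near=> n.
apply: le_trans (gstar_bound n) _.
rewrite lee_fin.
have : -A <= n%:R by near: n; exact: nbhs_infty_ger.
rewrite -natr1; lra.
Unshelve. all: by end_near.
Qed.

Lemma chain (f : nat -> bool) t : (forall j, (j < t)%N -> f j -> f j.+1) ->
  forall i, (i <= t)%N -> f i -> f t.
Proof.
elim: t => [|t IH] Hf i.
  by rewrite leqn0 => /eqP ->.
rewrite leq_eqVlt => /orP [/eqP -> //|Hi fi].
apply: (Hf) => //; apply: (IH _ i) => // j Hj; apply: Hf.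
exact: ltnW.
Qed.

Lemma det_pol (d : St -> Ac) : is_policy (@det_policy R 1 0 d).
Proof.
split; first by move=> *; rewrite /det_policy ler0n.
by move=> h s; rewrite big_ord1 /det_policy (ord1 (d s)).
Qed.

Lemma occ_term (d : St -> Ac) (s s' : St) t ss aa :
  s != sink 1 -> s' != sink 1 ->
  path_prob pE (@dirac_st R 1 s) (@det_policy R 1 0 d) (n:=t) ss aa *
    ((ss ord_max) == s')%:R <= (ss == [ffun => ord0])%:R * q ^+ t.
Proof.
move=> /nonsink -> /nonsink ->.
have [->|Hne] := eqVneq ss [ffun => ord0].
  rewrite mul1r /path_prob /dirac_st ffunE eqxx mul1r ffunE eqxx mulr1.
  apply: le_trans (_ : _ <= \prod_(k < t) q) _; last by rewrite prodr_const card_ord.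
  apply: ler_prod => k _.
  rewrite /st_cur /st_next !ffunE /det_policy (ord1 (aa k)) (ord1 (d _)) eqxx mul1r.
  by rewrite /pE /= lexx ltW // q_gt0.
rewrite mul0r.
have [Hm|Hm] := eqVneq (ss ord_max) ord0; last by rewrite mulr0.
have [i Hi] : exists i, ss i != ord0.
  apply/existsP; apply: contraT; rewrite negb_exists => /forallP H.
  by case/eqP: Hne; apply/ffunP => i; rewrite ffunE; move/negPn/eqP: (H i).
have [[k /andP [Hk1 Hk2]]|Hno] := pselect (exists k : 'I_t,
   (st_cur ss k == sink 1) && (st_next ss k != sink 1)).
  by rewrite /path_prob (bigD1 k) //= /pE Hk1 (negbTE Hk2) mulr0 mul0r mulr0 mul0r.
exfalso.
pose f (j : nat) := ss (inord j) == sink 1.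
have Hf : forall j, (j < t)%N -> f j -> f j.+1.
  move=> j Hj fj; apply: contraT => Hn; case: Hno.
  exists (Ordinal Hj); apply/andP; split.
    by rewrite /st_cur; move: fj; rewrite /f; congr (ss _ == _); apply: val_inj;
       rewrite /= inordK // ltnS ltnW.
  by move: Hn; rewrite /f /st_next; congr (~~ (ss _ == _)); apply: val_inj;
     rewrite /= inordK.
have := @chain f t Hf i (ltn_ord i).
rewrite /f inord_val => /(_ (introT eqP (sink_or0 _ Hi))).
have -> : inord t = ord_max :> 'I_t.+1 by apply: val_inj; rewrite /= inordK.
by rewrite Hm.
Qed.

Lemma occ_le (d : St -> Ac) (s s' : St) t : s != sink 1 -> s' != sink 1 ->
  occ pE (@det_policy R 1 0 d) s s' t <= q ^+ t.
Proof.
move=> Hs Hs'; rewrite /occ /expect.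
apply: le_trans (_ : _ <= \sum_(ss : {ffun 'I_t.+1 -> St})
   \sum_(aa : {ffun 'I_t -> Ac}) (ss == [ffun => ord0])%:R * q ^+ t) _.
  apply: ler_sum => ss _; apply: ler_sum => aa _; exact: occ_term.
rewrite (bigD1 [ffun => ord0]) //= [X in _ + X]big1; last first.
  move=> ss Hss; rewrite (negbTE Hss).
  by rewrite big1 // => aa _; rewrite mul0r.
rewrite addr0 eqxx; under eq_bigr do rewrite mul1r.
rewrite sumr_const card_ffun !card_ord exp1n; exact: lexx.
Qed.

Lemma occ_ge0 (d : St -> Ac) (s s' : St) t :
  0 <= occ pE (@det_policy R 1 0 d) s s' t.
Proof.
rewrite /occ /expect sumr_ge0 // => ss _; rewrite sumr_ge0 // => aa _.
apply: mulr_ge0 => //; apply: path_prob_ge0; last exact: det_pol.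
by move=> x; rewrite /dirac_st.
Qed.

Lemma transE : transient pE.
Proof.
move=> d s s' Hs Hs'.
apply: (@le_lt_trans _ _ (\sum_(0 <= t <oo) (q ^+ t)%:E)%E).
  apply: lee_nneseries => [i _ _|n _]; rewrite lee_fin ?occ_ge0 ?occ_le //.
have -> : (\sum_(0 <= t <oo) (q ^+ t)%:E)%E = limn (EFin \o series (geometric 1 q)).
  apply/congr_lim/funext => n /=; rewrite -sumEFin /series /=.
  by apply: eq_bigr => i _; rewrite /geometric /= mul1r.
rewrite EFin_lim ?ltry //; apply: is_cvg_geometric_series.
by rewrite ger0_norm ?q_lt1 // ltW // q_gt0.
Qed.
End Ex.

Theorem proposition5 (R : realType) :
  exists (nS nA : nat) (p r : state nS -> action nA -> state nS -> R)
         (mu : state nS -> R) (beta : R),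
    [/\ is_mdp p r mu, transient p, 0 < beta &
        g_star_infty p r mu beta = -oo%E].
Proof.
exists 1, 0, (@pE R), (@rE R), (@muE R), 1.
split; [exact: mdpE | exact: transE | exact: ltr01 | exact: ginf].
Qed.
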